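(* There exist a finitely generated non-amenable group $\Gamma$ (for instance $\Gamma=C_2*C_2*C_2*C_2$) and a profinite action of $\Gamma$ that is ergodic, faithful, hyperfinite and topologically free.
   Context: A profinite action of $\Gamma$ is an action on an inverse limit $X=\varprojlim V_n$ of finite $\Gamma$-sets $V_1\leftarrow V_2\leftarrow\cdots$ with $\Gamma$-equivariant surjective bonding maps, equipped with the inverse limit topology and the probability measure induced by the normalized counting measures on the $V_n$; the action is measure preserving. Hyperfinite means the orbit equivalence relation is, up to a null set, an ascending union of finite measurable equivalence relations. Faithful means every nontrivial element acts nontrivially. Topologically free means the set of points not fixed by any nontrivial element of $\Gamma$ is comeager (equivalently, the fixed point set of each nontrivial element has empty interior). *)

(* Defs.v *)
From HB Require Import structures.
From mathcomp Require Import all_boot all_algebra.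
From mathcomp Require Import monoid.
From mathcomp Require Import all_classical all_reals all_analysis.

Set Implicit Arguments.
Unset Strict Implicit.
Unset Printing Implicit Defensive.

Import GRing.Theory Num.Theory.
Local Open Scope classical_set_scope.
Local Open Scope ring_scope.

Definition finitely_generated (G : groupType) : Prop :=
  exists S : seq G,
    forall H : set G,
      (forall s, s \in S -> H s) -> H 1%g ->
      (forall x y, H x -> H y -> H (x * y)%g) ->
      (forall x, H x -> H (x^-1)%g) ->
      H = setT.

Definition amenable (R : realType) (G : groupType) : Prop :=
  exists m : set G -> R,
    [/\ (forall A, 0 <= m A),
        m setT = 1,
        (forall A B, A `&` B = set0 -> m (A `|` B) = m A + m B) &
        (forall (g : G) A, m ((fun a => (g * a)%g) @` A) = m A)].

(* The finite Gamma-sets are V_n := 'I_(k n).+1 (nonempty, as needed    *)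
(* for normalized counting measures).  The inverse limit X is realised  *)
(* as the set of compatible sequences inside the ambient product        *)
(* Y := forall n, V_n.                                                  *)

Definition seqspace (k : nat -> nat) := forall n : nat, 'I_(k n).+1.

HB.instance Definition _ k := gen_eqMixin (seqspace k).
HB.instance Definition _ k := gen_choiceMixin (seqspace k).
HB.instance Definition _ k := isPointed.Build (seqspace k) (fun n => ord0).

Definition cylinders (k : nat -> nat) : set (set (seqspace k)) :=
  fun A => exists n (v : 'I_(k n).+1), A = [set y : seqspace k | y n = v].

Notation seqmeas k := (g_sigma_algebraType (@cylinders k)).

Definition is_action (G : groupType) (T : Type) (a : G -> T -> T) : Prop :=
  (forall x, a 1%g x = x) /\ (forall g h x, a (g * h)%g x = a g (a h x)).

Definition profinite_data (G : groupType) (k : nat -> nat)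
  (act : forall n, G -> 'I_(k n).+1 -> 'I_(k n).+1)
  (p : forall n, 'I_(k n.+1).+1 -> 'I_(k n).+1) : Prop :=
  [/\ forall n, is_action (act n),
      forall n, (forall w, exists v, p n v = w) &
      forall n g v, p n (act n.+1 g v) = act n g (p n v)].

Definition invlim (k : nat -> nat) (p : forall n, 'I_(k n.+1).+1 -> 'I_(k n).+1)
  : set (seqspace k) := [set y | forall n, p n (y n.+1) = y n].

Definition seqact (G : groupType) (k : nat -> nat)
  (act : forall n, G -> 'I_(k n).+1 -> 'I_(k n).+1) (g : G) (y : seqspace k)
  : seqspace k := fun n => act n g (y n).

(** mu is the measure on X induced by the normalized counting measures on
    the V_n: it is carried by X and gives mass 1/|V_n| to each cylinder
    {x in X | x_n = v}. *)
Definition induced_measure (R : realType) (k : nat -> nat)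
  (p : forall n, 'I_(k n.+1).+1 -> 'I_(k n).+1)
  (mu : probability (seqmeas k) R) : Prop :=
  mu (invlim p) = 1%E /\
  forall n (v : 'I_(k n).+1),
    mu (invlim p `&` [set y : seqmeas k | y n = v]) = ((k n).+1%:R^-1)%:E.

Definition invlim_open (k : nat -> nat)
  (p : forall n, 'I_(k n.+1).+1 -> 'I_(k n).+1) (U : set (seqspace k)) : Prop :=
  U `<=` invlim p /\
  forall x, U x -> exists n, invlim p `&` [set y | y n = x n] `<=` U.

Section Properties.
Variables (R : realType) (G : groupType) (k : nat -> nat).
Variables (act : forall n, G -> 'I_(k n).+1 -> 'I_(k n).+1)
          (p : forall n, 'I_(k n.+1).+1 -> 'I_(k n).+1)
          (mu : probability (seqmeas k) R).

Local Notation X := (invlim p).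
Local Notation a := (seqact act).

Definition ergodic : Prop :=
  forall A : set (seqmeas k), measurable A -> A `<=` X ->
    (forall g, a g @` A = A) -> mu A = 0%E \/ mu A = 1%E.

Definition faithful : Prop :=
  forall g : G, (forall x, X x -> a g x = x) -> g = 1%g.

Definition topologically_free : Prop :=
  forall g : G, g <> 1%g ->
    forall U, invlim_open p U -> U `<=` [set x | a g x = x] -> U = set0.

Definition orbit_rel (x y : seqspace k) : Prop := exists g : G, y = a g x.

Definition hyperfinite : Prop :=
  exists (N : set (seqmeas k)) (E : nat -> seqmeas k -> seqmeas k -> Prop),
  [/\ (measurable N /\ mu N = 0%E),
      (forall m, measurable [set z : seqmeas k * seqmeas k | E m z.1 z.2]) /\
      (forall m x y, X x -> X y -> E m x y -> E m.+1 x y),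
      (forall m, [/\ forall x, X x -> E m x x,
                     forall x y, X x -> X y -> E m x y -> E m y x &
                     forall x y z, X x -> X y -> X z ->
                       E m x y -> E m y z -> E m x z]),
      (forall m x, X x -> finite_set [set y | X y /\ E m x y]) &
      (forall x y, X x -> X y -> ~ N x -> ~ N y ->
         (orbit_rel x y <-> exists m, E m x y))].

End Properties.

(* Main.v *)
Require Import Defs.
From HB Require Import structures.
From mathcomp Require Import all_boot all_algebra.
From mathcomp Require Import monoid.
From mathcomp Require Import all_classical all_reals all_analysis.
From mathcomp Require Import zify ring lra.
From Stdlib Require Import FunctionalExtensionality Classical.
Set Implicit Arguments.
Unset Strict Implicit.
Unset Printing Implicit Defensive.

Fixpoint m (j : nat) : nat := if j is j'.+1 then m j' * (m j').-1 else 3.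

Lemma mS j : m j.+1 = m j * (m j).-1. Proof. by []. Qed.
Arguments m : simpl never.

Lemma m_ge3 j : 3 <= m j.
Proof.
elim: j => // j IH; rewrite mS.
have h : 2 <= (m j).-1 by lia.
have := leq_mul IH h; lia.
Qed.

Definition step (l v : nat) : nat :=
  if v == 0 then l.+1 else if v == l.+1 then 0 else v.
Definition loopb (l v : nat) : bool := (v != 0) && (v != l.+1).
Definition psi (j l v : nat) : nat := l * (m j).-1 + (v.-1 - (l < v.-1)).

Definition tl (z : nat -> nat) : nat -> nat := fun e => z e.+1.
Definition cns (v : nat) (z : nat -> nat) : nat -> nat :=
  fun d => if d is d'.+1 then z d' else v.

Fixpoint actd (d j l : nat) (z : nat -> nat) {struct d} : nat :=
  if loopb l (z 0) then (if d is d'.+1 then actd d' j.+1 (psi j l (z 0)) (tl z) else z 0)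
  else (if d is d'.+1 then z d else step l (z 0)).

Definition lact j l z : nat -> nat := fun d => actd d j l z.
Definition wact j (w : seq nat) z := foldr (lact j) z w.

Definition walk j (w : seq nat) (v : nat) : nat * seq nat :=
  foldr (fun l p => if loopb l p.1 then (p.1, psi j l p.1 :: p.2)
                    else (step l p.1, p.2)) (v, [::]) w.

Lemma cns_tl z : cns (z 0) (tl z) = z.
Proof. by apply: functional_extensionality => -[|d]. Qed.

Lemma tl_cns v z : tl (cns v z) = z.
Proof. by []. Qed.

Lemma lact_cns j l v z :
  lact j l (cns v z) = if loopb l v then cns v (lact j.+1 (psi j l v) z)
                       else cns (step l v) z.
Proof.
apply: functional_extensionality => -[|d] /=; rewrite /lact /=.
  by case: ifP.
by case: ifP.
Qed.

Lemma walk_act j w v z :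
  wact j w (cns v z) = cns (walk j w v).1 (wact j.+1 (walk j w v).2 z).
Proof.
elim: w => //= l w IH; rewrite IH lact_cns.
by case: ifP.
Qed.

Lemma walk_cat j w1 w2 v :
  walk j (w1 ++ w2) v = ((walk j w1 (walk j w2 v).1).1,
                         (walk j w1 (walk j w2 v).1).2 ++ (walk j w2 v).2).
Proof.
rewrite /walk foldr_cat.
elim: w1 => //= [|l w1 IH]; first by case: (foldr _ _ _).
by rewrite IH /=; case: ifP.
Qed.

Lemma step_invol l v : step l (step l v) = v.
Proof.
rewrite /step; case: (eqVneq v 0) => [->|v0] /=; first by rewrite eqxx.
case: (eqVneq v l.+1) => [->|vl] //=.
by rewrite (negPf v0) (negPf vl).
Qed.

Lemma loopb_step l v : ~~ loopb l v -> ~~ loopb l (step l v).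
Proof.
rewrite /loopb /step; case: (eqVneq v 0) => [->|v0] //=; first by rewrite /= ?andbF ?eqxx.
by case: (eqVneq v l.+1).
Qed.

Lemma tl_lact j l z : loopb l (z 0) -> tl (lact j l z) = lact j.+1 (psi j l (z 0)) (tl z).
Proof. by move=> h; apply: functional_extensionality => d; rewrite /tl /lact /= h. Qed.

Lemma lact_invol j l z : lact j l (lact j l z) = z.
Proof.
apply: functional_extensionality => d; rewrite {1}/lact.
elim: d j l z => [|d IH] j l z /=.
  rewrite /lact /=; case h: (loopb l (z 0)); first by rewrite h.
  by rewrite (negPf (loopb_step (negbT h))) step_invol.
rewrite {1 2}/lact /=; case h: (loopb l (z 0)).
  by rewrite h -/(lact _ _ _) tl_lact // IH.
by rewrite (negPf (loopb_step (negbT h))).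
Qed.

Definition dcd j c : nat * nat :=
  let M := (m j).-1 in let l := c %/ M in let r := c %% M in
  (l, (if r < l then r else r.+1).+1).

Lemma psi_lt j l v : l < m j -> v <= m j -> loopb l v -> psi j l v < m j.+1.
Proof.
rewrite /loopb /psi /= => hl hv /andP[/eqP h0 /eqP h1].
have h3 := m_ge3 j.
set M := (m j).-1.
have hr : v.-1 - (l < v.-1) < M.
  case: (ltnP l v.-1) => /= h; rewrite /M; lia.
have hM : m j = M.+1 by rewrite /M; lia.
rewrite mS hM /=.
have : l <= M by lia.
move=> hlM; have := leq_mul hlM (leqnn M); nia.
Qed.

Lemma psi_inj j l v l' v' : l < m j -> v <= m j -> loopb l v ->
  l' < m j -> v' <= m j -> loopb l' v' -> psi j l v = psi j l' v' -> l = l' /\ v = v'.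
Proof.
rewrite /loopb /psi => hl hv /andP[/eqP h0 /eqP h1] hl' hv' /andP[/eqP h0' /eqP h1'] e.
have h3 := m_ge3 j.
set M := (m j).-1 in e.
have hM0 : 0 < M by rewrite /M; lia.
have hr : v.-1 - (l < v.-1) < M.
  case: (ltnP l v.-1) => /= h; rewrite /M; lia.
have hr' : v'.-1 - (l' < v'.-1) < M.
  case: (ltnP l' v'.-1) => /= h; rewrite /M; lia.
have el : l = l'.
  have := congr1 (fun x => x %/ M) e; rewrite /= !divnMDl // !divn_small //; lia.
subst l'; split => //.
have er : v.-1 - (l < v.-1) = v'.-1 - (l < v'.-1) by lia.
move: er; case: (ltnP l v.-1); case: (ltnP l v'.-1) => /= ? ? ?; lia.
Qed.

Lemma dcd_spec j c : c < m j.+1 ->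
  let p := dcd j c in [/\ p.1 < m j, p.2 <= m j, loopb p.1 p.2 & psi j p.1 p.2 = c].
Proof.
move=> hc /=; have h3 := m_ge3 j.
rewrite /dcd /=; set M := (m j).-1.
have hM0 : 0 < M by rewrite /M; lia.
have hM : m j = M.+1 by rewrite /M; lia.
move: hc; rewrite mS hM /= => hc.
have hl : c %/ M < M.+1 by rewrite ltn_divLR //.
have hr : c %% M < M by rewrite ltn_mod.
have ec := divn_eq c M.
split => //.
- by case: ifP => _; lia.
- rewrite /loopb; case: ifP => h; rewrite /=; first [apply/andP; split; apply/eqP; lia | apply/eqP; lia].
- rewrite /psi hM /=; case: ifP => h /=.
    have -> : (c %/ M < c %% M) = false by apply/negbTE; rewrite -leqNgt ltnW.
    rewrite subn0; lia.
  have -> : (c %/ M < (c %% M).+1) = true by rewrite ltnS leqNgt h.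
  rewrite subn1 /=; lia.
Qed.

Fixpoint redl (w : seq nat) : bool :=
  if w is a :: w' then (if w' is b :: _ then (a != b) && redl w' else true) else true.

Lemma redl_cons l w : redl (l :: w) = (redl w && ((w != [::]) ==> (l != head 0 w))).
Proof. by case: w => //= b w; rewrite andbC. Qed.

Lemma walk_cons j l w v : walk j (l :: w) v =
  if loopb l (walk j w v).1 then ((walk j w v).1, psi j l (walk j w v).1 :: (walk j w v).2)
  else (step l (walk j w v).1, (walk j w v).2).
Proof. by []. Qed.

Lemma walk_inv j w v : redl w -> all (fun l => l < m j) w -> v <= m j ->
 let p := walk j w v in
 [/\ p.1 <= m j, redl p.2, all (fun c => c < m j.+1) p.2,
     (p.2 = [::] -> (w = [::] /\ p.1 = v) \/
        (p.1 <> v /\ (p.1 = 0 -> v = (head 0 w).+1) /\ (p.1 <> 0 -> p.1 = (head 0 w).+1)))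
   & (forall c s', p.2 = c :: s' -> exists l0 u, [/\ loopb l0 u, l0 < m j, u <= m j & c = psi j l0 u] /\
        [/\ (p.1 = u -> head 0 w = l0), (p.1 = 0 -> u = (head 0 w).+1) &
        (p.1 <> u -> p.1 <> 0 -> p.1 = (head 0 w).+1)])].
Proof.
elim: w => [|l w IH]; first by move=> _ _ hv /=; split => //; left.
rewrite redl_cons => /andP[redw hne] hall0 hv; have /andP[hl hall] := hall0.
have [h1 h2 h3 h4 h5] := IH redw hall hv.
rewrite walk_cons.
move: h1 h2 h3 h4 h5; set p := walk j w v => h1 h2 h3 h4 h5.
have wne : p.2 <> [::] -> w <> [::] by move=> + wn; rewrite /p wn.
have hlh : w <> [::] -> l <> head 0 w.
  move=> wn; move: hne; clear hall0; case: w wn {IH redw hall h4 h5 p h1 h2 h3 wne} => //= b w _.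
  by move/eqP.
clear hne hall0 IH.
have hw0 : w = [::] -> p.1 = v by move=> wn; rewrite /p wn.
move: p h1 h2 h3 h4 h5 wne hw0 => [p1 s] /= h1 h2 h3 h4 h5 wne hw0.
move: h4 h5 hlh; rewrite /=; set h := head 0 w => h4 h5 hlh.
have st0 : step l 0 = l.+1 by [].
have st1 : step l l.+1 = 0 by rewrite /step /= eqxx.
case: (boolP (loopb l p1)) => hlp; cbv zeta iota beta delta [fst snd].
- have p10 : p1 <> 0 by move=> e; move: hlp; rewrite /loopb e.
  split => //.
  + rewrite redl_cons h2 /=; case E: s => [|c s'] //=.
    have [l0 [u [[lu l0m um ec] [e1 e2 e3]]]] := h5 c s' E.
    apply/negP; rewrite ec => /eqP e; have [el eu] := psi_inj hl h1 hlp l0m um lu e.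
    have wn : w <> [::] by apply: wne; rewrite E.
    by apply: (hlh wn); rewrite e1.
  + by rewrite /= h3 andbT psi_lt.
  + by move=> c s' [<- _]; exists l, p1; split; split.
- have hx : p1 = 0 \/ p1 = l.+1.
    move: hlp; rewrite /loopb negb_and !negbK => /orP[/eqP|/eqP]; tauto.
  case: hx => ep; subst p1; rewrite ?st0 ?st1 /=.
  + split => //.
    * move=> E; right; case: (h4 E) => [[wn ev]|[nv [c0 c1]]].
        by subst v; split => //; split.
      have wn : w <> [::] by move=> wn; apply: nv; exact: hw0.
      have hv' := c0 erefl; split; last by split.
      by rewrite hv' => -[]; apply: hlh.
    * move=> c s' E; have [l0 [u [[lu l0m um ec] [e1 e2 e3]]]] := h5 c s' E.
      exists l0, u; split => //; split => //.
      have wn : w <> [::] by apply: wne; rewrite E.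
      by rewrite (e2 erefl) => -[] /hlh.
  + split => //.
    * move=> E; right; case: (h4 E) => [[wn ev]|[nv [c0 c1]]].
        by subst v; split => //; split.
      have wn : w <> [::] by move=> wn; apply: nv; exact: hw0.
      by have [] := hlh wn; have := c1 ltac:(done) => -[].
    * move=> c s' E; have [l0 [u [[lu l0m um ec] [e1 e2 e3]]]] := h5 c s' E.
      have u0 : u <> 0 by move=> e; move: lu; rewrite /loopb e.
      exists l0, u; split => //; split => //.
        by move=> e; case: u0.
      move=> _; case: (eqVneq l.+1 u) => [//|nu].
      have wn : w <> [::] by apply: wne; rewrite E.
      by have [] := hlh wn; have := e3 (elimN eqP nu) ltac:(done) => -[].
Qed.

Definition valid j (z : nat -> nat) := forall d, z d <= m (j + d).

Lemma valid_tl j z : valid j z -> valid j.+1 (tl z).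
Proof. by move=> h d; rewrite /tl addSnnS. Qed.

Lemma valid_cns j v z : v <= m j -> valid j.+1 z -> valid j (cns v z).
Proof. by move=> hv hz [|d] /=; rewrite ?addn0 // -addSnnS. Qed.

Lemma valid0 j : valid j (fun _ => 0).
Proof. by []. Qed.

Lemma step_le j l v : l < m j -> v <= m j -> step l v <= m j.
Proof. by rewrite /step; case: ifP => _ //; case: ifP. Qed.

Lemma lact_valid j l z : valid j z -> l < m j -> valid j (lact j l z).
Proof.
move=> hz hl d; rewrite /lact.
elim: d j l z hz hl => [|d IH] j l z hz hl /=.
  have h0 := hz 0; rewrite addn0 in h0 *.
  by case: ifP => _; last exact: step_le.
case: ifP => h.
  rewrite -addSnnS; apply: IH; first exact: valid_tl.
  by apply: psi_lt => //; have := hz 0; rewrite addn0.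
exact: hz.
Qed.

Lemma wact_valid j w z : valid j z -> all (fun l => l < m j) w -> valid j (wact j w z).
Proof.
elim: w => //= l w IH hz /andP[hl hw]; apply: lact_valid => //; exact: IH.
Qed.

Lemma walk_size0 j w : w != [::] -> size (walk j w 0).2 < size w.
Proof.
have gen : forall w v, size (walk j w v).2 <= size w.
  elim=> // l w' IH v; rewrite walk_cons; case: ifP => _ /=; last exact: leqW.
  by rewrite ltnS.
elim: w => // l w IH _; rewrite walk_cons.
case: (eqVneq w [::]) => [->|wn] /=; first by [].
case: ifP => _ /=; first by rewrite ltnS IH.
exact: leq_trans (IH wn) _.
Qed.

Lemma cns_inj v z v' z' : cns v z = cns v' z' -> v = v' /\ z = z'.
Proof. by move=> e; split; [exact: (congr1 (fun f => f 0) e)|exact: (congr1 tl e)]. Qed.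

Lemma tf0 L : forall j w, size w <= L -> w != [::] -> redl w ->
  all (fun l => l < m j) w -> exists z, valid j z /\ wact j w z <> z.
Proof.
elim: L => [|L IH] j w hs wn hr ha; first by case: w hs wn hr ha.
have [h1 h2 h3 h4 h5] := walk_inv hr ha (leq0n (m j)).
case: (eqVneq (walk j w 0).1 0) => e.
  have sn : (walk j w 0).2 != [::].
    apply/eqP => E; case: (h4 E) => [[wn' _]|[? _]] //; by move: wn; rewrite wn'.
  have [z' [vz' hz']] := IH j.+1 _ (leq_trans (walk_size0 j wn) hs) sn h2 h3.
  exists (cns 0 z'); split; first exact: valid_cns.
  by rewrite walk_act e => /cns_inj [_].
exists (cns 0 (fun _ => 0)); split; first exact: valid_cns.
by rewrite walk_act => /cns_inj [/eqP]; rewrite (negPf e).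
Qed.

Lemma tf n : forall j u w, valid j u -> w != [::] -> redl w -> all (fun l => l < m j) w ->
  exists z, [/\ valid j z, (forall d, d < n -> z d = u d) & wact j w z <> z].
Proof.
elim: n => [|n IH] j u w hu wn hr ha.
  by have [z [? ?]] := tf0 (leqnn _) wn hr ha; exists z; split.
have hv : u 0 <= m j by have := hu 0; rewrite addn0.
have [h1 h2 h3 h4 h5] := walk_inv hr ha hv.
case: (eqVneq (walk j w (u 0)).1 (u 0)) => e.
  have sn : (walk j w (u 0)).2 != [::].
    apply/eqP => E; case: (h4 E) => [[wn' _]|[? _]] //; by move: wn; rewrite wn'.
  have [z' [vz' ag hz']] := IH j.+1 (tl u) _ (valid_tl hu) sn h2 h3.
  exists (cns (u 0) z'); split; first exact: valid_cns.
    by case=> [|d] //= hd; rewrite ag.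
  by rewrite walk_act e => /cns_inj [_].
exists u; split => //.
by rewrite -{1 2}(cns_tl u) walk_act => /cns_inj [/eqP]; rewrite (negPf e).
Qed.

Definition go (a b : nat) : seq nat :=
  (if b is b'.+1 then [:: b'] else [::]) ++ (if a is a'.+1 then [:: a'] else [::]).

Lemma walk_go j a b : walk j (go a b) a = (b, [::]).
Proof.
case: a => [|a]; case: b => [|b] //=; rewrite /walk /= /loopb /step /= ?eqxx //=.
Qed.

Lemma go_valid j a b : a <= m j -> b <= m j -> all (fun l => l < m j) (go a b).
Proof. by case: a => [|a]; case: b => [|b] //= ? ?; rewrite ?andbT //; apply/andP; split. Qed.

Definition lift1 j a c := let p := dcd j c in go p.2 a ++ p.1 :: go a p.2.
Definition liftw j a w := flatten (map (lift1 j a) w).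

Lemma walk_lift1 j a c : c < m j.+1 -> walk j (lift1 j a c) a = (a, [:: c]).
Proof.
move=> hc; move: (dcd_spec hc); rewrite /lift1; case: (dcd j c) => l v /= [h1 h2 h3 h4].
by rewrite walk_cat walk_cons walk_go /= h3 walk_go /= h4.
Qed.

Lemma lift1_valid j a c : c < m j.+1 -> a <= m j -> all (fun l => l < m j) (lift1 j a c).
Proof.
move=> hc ha; move: (dcd_spec hc); rewrite /lift1; case: (dcd j c) => l v /= [h1 h2 h3 h4].
by rewrite all_cat /= !go_valid // h1.
Qed.

Lemma walk_liftw j a w : all (fun c => c < m j.+1) w -> walk j (liftw j a w) a = (a, w).
Proof.
elim: w => //= c w IH /andP[hc hw].
by rewrite /liftw /= -/(liftw j a w) walk_cat IH //= walk_lift1.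
Qed.

Lemma liftw_valid j a w : all (fun c => c < m j.+1) w -> a <= m j ->
  all (fun l => l < m j) (liftw j a w).
Proof.
elim: w => //= c w IH /andP[hc hw] ha.
by rewrite /liftw /= -/(liftw j a w) all_cat lift1_valid // IH.
Qed.

Definition splice n (u z : nat -> nat) : nat -> nat := fun d => if d < n then u d else z d.

Lemma trans_lemma n : forall j z u, valid j z -> valid j u ->
  exists w, all (fun l => l < m j) w /\ wact j w z = splice n u z.
Proof.
elim: n => [|n IH] j z u hz hu.
  by exists [::]; split => //; apply: functional_extensionality.
have [w' [hw' e']] := IH j.+1 (tl z) (tl u) (valid_tl hz) (valid_tl hu).
have hz0 : z 0 <= m j by have := hz 0; rewrite addn0.
have hu0 : u 0 <= m j by have := hu 0; rewrite addn0.
exists (go (z 0) (u 0) ++ liftw j (z 0) w'); split.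
  by rewrite all_cat go_valid // liftw_valid.
transitivity (wact j (go (z 0) (u 0) ++ liftw j (z 0) w') (cns (z 0) (tl z)));
  first by rewrite cns_tl.
rewrite walk_act walk_cat walk_liftw // walk_go /= e'.
by apply: functional_extensionality => -[|d].
Qed.

Lemma lact_one d : forall j l z, lact j l z d <> z d -> forall e, d < e -> lact j l z e = z e.
Proof.
rewrite /lact; elim: d => [|d IH] j l z /=.
  by case: ifP => // h _ [|e] //= _; rewrite h.
case: ifP => h // hd [|e] //= he; rewrite h.
exact: IH.
Qed.

Lemma lact_fin j l z : exists M, forall d, M <= d -> lact j l z d = z d.
Proof.
case: (classic (exists d, lact j l z d <> z d)) => [[d hd]|h].
  by exists d.+1 => e he; apply: (lact_one hd).
exists 0 => d _; apply: NNPP => hd; apply: h; by exists d.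
Qed.

Lemma wact_fin j w z : exists M, forall d, M <= d -> wact j w z d = z d.
Proof.
elim: w => [|l w [M1 h1]] /=; first by exists 0.
have [M2 h2] := lact_fin j l (wact j w z).
exists (maxn M1 M2) => d hd; rewrite h2 ?h1 //; lia.
Qed.

Lemma actd_local d : forall j l z z', (forall e, e <= d -> z e = z' e) ->
  actd d j l z = actd d j l z'.
Proof.
elim: d => [|d IH] j l z z' h /=; first by rewrite h.
rewrite (h 0) //; case: ifP => _; last by rewrite h.
by apply: IH => e he; rewrite /tl h.
Qed.

Lemma wact_local n j w z z' : (forall e, e < n -> z e = z' e) ->
  forall e, e < n -> wact j w z e = wact j w z' e.
Proof.
move=> h; elim: w => //= l w IH e he.
by rewrite /lact; apply: actd_local => e' he'; apply: IH; lia.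
Qed.

Definition r j := (m j).+1.
Fixpoint N n := if n is n'.+1 then N n' * r n' else 1.
Fixpoint enc n (z : nat -> nat) : nat := if n is n'.+1 then enc n' z * r n' + z n' else 0.
Fixpoint dec n (v : nat) : nat -> nat :=
  if n is n'.+1 then fun i => if i < n' then dec n' (v %/ r n') i
                              else if i == n' then v %% r n' else 0
  else fun _ => 0.

Lemma N_gt0 n : 0 < N n.
Proof. by elim: n => //= n IH; rewrite muln_gt0 IH. Qed.

Lemma enc_lt n z : (forall i, i < n -> z i <= m i) -> enc n z < N n.
Proof.
elim: n => //= n IH h.
have h1 := IH (fun i hi => h i (ltnW hi)).
have h2 := h n (ltnSn n).
rewrite /r in h2 *.
have : enc n z <= (N n).-1 by lia.
move=> h3; have := leq_mul h3 (leqnn (m n).+1).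
have := N_gt0 n; nia.
Qed.

Lemma enc_local n z z' : (forall i, i < n -> z i = z' i) -> enc n z = enc n z'.
Proof.
elim: n => //= n IH h; rewrite IH ?h //; move=> i hi; apply: h; lia.
Qed.

Lemma dec_valid n v i : dec n v i <= m i.
Proof.
elim: n v i => //= n IH v i; case: ifP => _ //; case: ifP => // /eqP ->.
by rewrite -ltnS; apply: ltn_pmod.
Qed.

Lemma dec_lt n v i : dec n v i < r i.
Proof. by rewrite /r ltnS dec_valid. Qed.

Lemma enc_dec n v : v < N n -> enc n (dec n v) = v.
Proof.
elim: n v => [|n IH] v /=; first by case: v.
move=> hv; rewrite ltnn eqxx.
have -> : enc n (dec n.+1 v) = enc n (dec n (v %/ r n)).
  by apply: enc_local => i hi /=; rewrite hi.
rewrite IH; first by rewrite -divn_eq.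
by rewrite ltn_divLR // /r.
Qed.

Lemma dec_enc n z : (forall i, i < n -> z i <= m i) -> forall i, i < n -> dec n (enc n z) i = z i.
Proof.
elim: n => //= n IH h i hi.
have hzn : z n < r n by rewrite /r ltnS h.
have e1 : (enc n z * r n + z n) %/ r n = enc n z by rewrite divnMDl // divn_small ?addn0.
case: ifP => hin.
  by rewrite e1 IH // => k hk; apply: h; lia.
have -> : i = n by lia.
by rewrite eqxx modnMDl modn_small.
Qed.

Lemma enc_div n z : z n <= m n -> enc n.+1 z %/ r n = enc n z.
Proof. by move=> h /=; rewrite divnMDl // divn_small ?addn0 // /r ltnS. Qed.

Section FreeProd.
Local Notation L := 'I_3.

Fixpoint redg (w : seq L) : bool :=
  if w is a :: w' then (if w' is b :: _ then (a != b) && redg w' else true) else true.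

Definition lmul (s : L) (w : seq L) : seq L :=
  if w is t :: w' then (if t == s then w' else s :: w) else [:: s].

Definition mulw (u v : seq L) := foldr lmul v u.

Lemma redg_tl a w : redg (a :: w) -> redg w.
Proof. by case: w => //= b w /andP[]. Qed.

Lemma redg_cons a b w : redg (a :: b :: w) = (a != b) && redg (b :: w).
Proof. by []. Qed.

Lemma redg_lmul s w : redg w -> redg (lmul s w).
Proof.
case: w => // t w; rewrite /lmul; case: ifP => [_|/negbT ts] h; first exact: redg_tl h.
by rewrite redg_cons eq_sym ts h.
Qed.

Lemma redg_mulw u v : redg v -> redg (mulw u v).
Proof. by elim: u => //= s u IH hv; apply: redg_lmul; exact: IH. Qed.

Lemma lmulK s w : redg w -> lmul s (lmul s w) = w.
Proof.
case: w => //= [|t w]; first by rewrite eqxx.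
case: ifP => [/eqP ->|ts] /=; last by rewrite eqxx.
case: w => //= b w /andP[sb _]; by rewrite eq_sym (negPf sb).
Qed.

Lemma mulw_lmul s x w : redg w -> mulw (lmul s x) w = lmul s (mulw x w).
Proof.
move=> hw; case: x => //= t x; case: ifP => [/eqP ->|_] //.
by rewrite lmulK // redg_mulw.
Qed.

Lemma mulwA u v w : redg w -> mulw (mulw u v) w = mulw u (mulw v w).
Proof.
move=> hw; elim: u => //= s u IH.
by rewrite mulw_lmul // IH.
Qed.

Lemma mulw_rev u t : mulw (rev u) (u ++ t) = t.
Proof.
elim: u t => //= s u IH t.
by rewrite rev_cons -cats1 /mulw foldr_cat /= eqxx -/(mulw _ _) IH.
Qed.

Lemma mulw_rev' u t : redg t -> mulw u (mulw (rev u) t) = t.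
Proof.
elim: u t => //= s u IH t ht.
rewrite rev_cons -cats1 /mulw foldr_cat /= -/(mulw _ _) -/(mulw _ _).
by rewrite IH ?lmulK // redg_lmul.
Qed.

Record FP := MkFP { fpw :> seq L; fpP : redg fpw }.

HB.instance Definition _ := [isSub for fpw].
HB.instance Definition _ := [Equality of FP by <:].
HB.instance Definition _ := [Choice of FP by <:].

Definition fp_one : FP := @MkFP [::] erefl.
Definition fp_mul (u v : FP) : FP := @MkFP (mulw u v) (redg_mulw u (fpP v)).
Definition fp_inv (u : FP) : FP := @MkFP (mulw (rev u) [::]) (@redg_mulw (rev u) [::] erefl).

Lemma fp_mulA : associative fp_mul.
Proof. by move=> u v w; apply: val_inj; rewrite /= mulwA // fpP. Qed.
Lemma fp_mul1 : left_id fp_one fp_mul.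
Proof. by move=> u; apply: val_inj. Qed.
Lemma fp_mul1r : right_id fp_one fp_mul.
Proof.
move=> [u hu]; apply: val_inj => /=; elim: u hu => //= s u IH hu.
by rewrite IH ?(redg_tl hu) //; case: u {IH} hu => //= t u /andP[+ _]; rewrite eq_sym => /negPf ->.
Qed.
Lemma fp_mulV : left_inverse fp_one fp_inv fp_mul.
Proof.
move=> u; apply: val_inj => /=; rewrite mulwA ?fpP //=.
by have := mulw_rev u [::]; rewrite cats0.
Qed.
Lemma fp_mulVr : right_inverse fp_one fp_inv fp_mul.
Proof. by move=> u; apply: val_inj => /=; rewrite mulw_rev'. Qed.

HB.instance Definition _ := isGroup.Build FP fp_mulA fp_mul1 fp_mul1r fp_mulV fp_mulVr.

End FreeProd.


Local Open Scope classical_set_scope.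
Import GRing.Theory Num.Theory.


Definition gl (s : 'I_3) : FP := @MkFP [:: s] erefl.

Lemma FP_fg : finitely_generated FP.
Proof.
exists [:: gl ord0; gl (lift ord0 ord0); gl ord_max] => H hS h1 hM hI.
apply/seteqP; split => // g _.
case: g => w hw; elim: w hw => [|s w IH] hw.
  by have -> : @MkFP [::] hw = 1%g by apply: val_inj.
have hw' := redg_tl hw.
have -> : MkFP hw = (gl s * MkFP hw')%g.
  apply: val_inj => /=; rewrite /mulw /=; case: w {IH} hw hw' => //= t w /andP[st _] _.
  by rewrite eq_sym (negPf st).
apply: hM (IH hw'); apply: hS.
have e : forall t : 'I_3, gl s = gl t -> gl s \in [:: gl ord0; gl (lift ord0 ord0); gl ord_max].
  by move=> t ->; case: t => mm hk; case: mm hk => [|[|[|k]]] hk.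
by apply: (e s).
Qed.

Definition hd (g : FP) : option 'I_3 := if fpw g is s :: _ then Some s else None.

Lemma hd_mul s (g : FP) : hd g != Some s -> hd (gl s * g)%g = Some s.
Proof.
case: g => -[|t w] hw //=; rewrite /hd /=.
by case: ifP => // /eqP ->; rewrite eqxx.
Qed.

Lemma FP_nonamenable (R : realType) : ~ amenable R FP.
Proof.
move=> [mm [m0 mT madd minv]].
have mmono : forall A B, A `<=` B -> (mm A <= mm B)%R.
  move=> A B AB; rewrite -(setDUK AB).
  by rewrite madd ?setDIK // lerDl.
have mC : forall A, mm (~` A) = (1 - mm A)%R.
  by move=> A; rewrite -mT -(setUv A) madd ?setICr //; ring.
pose Z s := [set g : FP | hd g = Some s].
have hZ : forall s, (1 / 2 <= mm (Z s))%R.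
  move=> s; have : (mm (~` Z s) <= mm (Z s))%R.
    rewrite -(minv (gl s)); apply: mmono => _ [g hg <-].
    by rewrite /Z /= hd_mul //; apply/eqP.
  rewrite mC; lra.
have dis : forall s t, s != t -> Z s `&` Z t = set0.
  move=> s t st; apply/seteqP; split => // g [hs ht]; rewrite /Z /= in hs ht; move: ht; rewrite hs => -[e].
  by move: st; rewrite e eqxx.
pose s0 : 'I_3 := ord0; pose s1 : 'I_3 := lift ord0 ord0; pose s2 : 'I_3 := ord_max.
have h : (mm (Z s0 `|` Z s1 `|` Z s2) <= 1)%R by rewrite -mT; apply: mmono.
rewrite madd in h; last by rewrite setIUl !dis // setU0.
rewrite madd in h; last by rewrite dis.
have := hZ s0; have := hZ s1; have := hZ s2; lra.
Qed.


Definition kk (n : nat) : nat := (N n).-1.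
Lemma kkS n : (kk n).+1 = N n.
Proof. by rewrite /kk prednK // N_gt0. Qed.

Definition gw (g : FP) : seq nat := map (@nat_of_ord 3) (fpw g).
Definition gact (g : FP) (z : nat -> nat) := wact 0 (gw g) z.

Lemma gw_valid g : all (fun l => l < m 0) (gw g).
Proof. by rewrite /gw all_map; apply/allP => x _ /=; exact: ltn_ord. Qed.

Lemma gact_lmul s w z : wact 0 (map (@nat_of_ord 3) (lmul s w)) z =
  lact 0 s (wact 0 (map (@nat_of_ord 3) w) z).
Proof.
case: w => //= t w; case: ifP => [/eqP ->|] //=.
by rewrite lact_invol.
Qed.

Lemma gact_mul g h z : gact (g * h)%g z = gact g (gact h z).
Proof.
rewrite /gact /gw /=; case: g => u hu /=; rewrite /mulw.
elim: u {hu} => //= s u IH.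
by rewrite gact_lmul IH.
Qed.

Lemma gact1 z : gact 1%g z = z.
Proof. by []. Qed.

Lemma gact_valid g z : valid 0 z -> valid 0 (gact g z).
Proof. by move=> h; apply: wact_valid => //; exact: gw_valid. Qed.

Lemma dec_valid0 n v : valid 0 (dec n v).
Proof. by move=> d; rewrite add0n; exact: dec_valid. Qed.

Lemma valid_lt z n : valid 0 z -> forall i, i < n -> z i <= m i.
Proof. by move=> h i _; exact: h. Qed.

Definition act (n : nat) (g : FP) (v : 'I_(kk n).+1) : 'I_(kk n).+1 :=
  Ordinal (n:=(kk n).+1) (m:=enc n (gact g (dec n v)))
    (eq_ind_r (fun x => _ < x) (enc_lt (@valid_lt _ n (gact_valid g (dec_valid0 n v)))) (kkS n)).

Arguments act : clear implicits.

Lemma r_gt0 n : 0 < r n. Proof. by []. Qed.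

Lemma proj_lt n x : x < (kk n.+1).+1 -> x %/ r n < (kk n).+1.
Proof. by rewrite !kkS ltn_divLR. Qed.

Definition proj (n : nat) (v : 'I_(kk n.+1).+1) : 'I_(kk n).+1 :=
  Ordinal (proj_lt (ltn_ord v)).
Arguments proj : clear implicits.

Lemma valE n g v : (act n g v : nat) = enc n (gact g (dec n v)).
Proof. by []. Qed.

Lemma dec_enc_gact n g z : valid 0 z ->
  forall e, e < n -> dec n (enc n (gact g z)) e = gact g z e.
Proof. by move=> h; apply: dec_enc; apply: valid_lt; exact: gact_valid. Qed.

Lemma act_id n (x : 'I_(kk n).+1) : act n 1%g x = x.
Proof. by apply: val_inj => /=; rewrite gact1 enc_dec // -kkS. Qed.

Lemma act_mul n g h (x : 'I_(kk n).+1) : act n (g * h)%g x = act n g (act n h x).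
Proof.
apply: val_inj => /=; rewrite gact_mul; apply: enc_local.
apply: wact_local => e he; rewrite dec_enc_gact //; exact: dec_valid0.
Qed.

Lemma proj_surj n (w : 'I_(kk n).+1) : exists v, proj n v = w.
Proof.
have h : w * r n < (kk n.+1).+1.
  have hw : (w : nat) < N n by rewrite -kkS.
  by rewrite [X in _ < X]kkS /= ltn_pmul2r.
by exists (Ordinal h); apply: val_inj; rewrite /= mulnK.
Qed.

Lemma proj_act n g v : proj n (act n.+1 g v) = act n g (proj n v).
Proof.
apply: val_inj; rewrite /= enc_div; last exact: (gact_valid g (dec_valid0 n.+1 v) n).
apply: enc_local; apply: wact_local => e he /=; by rewrite he.
Qed.

Lemma pdata : profinite_data (G:=FP) (k:=kk) act proj.
Proof.
split.
- by move=> n; split; [exact: act_id | exact: act_mul].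
- exact: proj_surj.
- exact: proj_act.
Qed.

Definition coords (y : seqspace kk) : nat -> nat := fun i => (y i.+1 : nat) %% r i.
Definition Phi (z : nat -> nat) : seqspace kk := fun n => inord (enc n z).
Notation XX := (invlim (k:=kk) proj).

Lemma coords_valid y : valid 0 (coords y).
Proof. by move=> d; rewrite add0n /coords -ltnS; apply: ltn_pmod. Qed.

Lemma X_enc y : XX y -> forall n, (y n : nat) = enc n (coords y).
Proof.
move=> hX; elim=> [|n IH] /=.
  by have : (y 0 : nat) < 1 := ltn_ord (y 0); case: (y 0 : nat).
have e := congr1 val (hX n); rewrite /= in e.
by rewrite -IH -e /coords -divn_eq.
Qed.

Lemma Phi_val z n : valid 0 z -> (Phi z n : nat) = enc n z.
Proof.
move=> hz; rewrite /Phi inordK // -ltnS kkS; apply: enc_lt; exact: valid_lt.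
Qed.

Lemma Phi_X z : valid 0 z -> XX (Phi z).
Proof.
move=> hz n; apply: ord_inj => /=; rewrite !Phi_val // enc_div //; exact: hz.
Qed.

Lemma coords_Phi z : valid 0 z -> coords (Phi z) = z.
Proof.
move=> hz; apply: functional_extensionality => i.
rewrite /coords Phi_val //= modnMDl modn_small // /r ltnS; exact: hz.
Qed.

Lemma Phi_coords y : XX y -> Phi (coords y) = y.
Proof.
move=> hX; apply: functional_extensionality_dep => n; apply: ord_inj.
rewrite Phi_val; [symmetry; exact: X_enc hX n | exact: coords_valid].
Qed.

Lemma act_Phi g z : valid 0 z -> seqact act g (Phi z) = Phi (gact g z).
Proof.
move=> hz; apply: functional_extensionality_dep => n; apply: ord_inj.
rewrite /seqact /= !Phi_val //; last exact: gact_valid.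
apply: enc_local; apply: wact_local => e he; rewrite dec_enc //; exact: valid_lt.
Qed.

Lemma Phi_inj z z' : valid 0 z -> valid 0 z' -> Phi z = Phi z' -> z = z'.
Proof. by move=> h h' e; rewrite -(coords_Phi h) -(coords_Phi h') e. Qed.


Lemma redl_redg (w : seq 'I_3) : redl (map (@nat_of_ord 3) w) = redg w.
Proof.
elim: w => //= a w IH; case: w IH => //= b w IH.
by rewrite IH.
Qed.

Lemma seqact_X g y : XX y -> seqact act g y = Phi (gact g (coords y)).
Proof. by move=> hX; rewrite -{1}(Phi_coords hX) act_Phi //; exact: coords_valid. Qed.

Lemma seqact_XX g y : XX y -> XX (seqact act g y).
Proof. by move=> hX; rewrite seqact_X //; apply: Phi_X; apply: gact_valid; exact: coords_valid. Qed.

Lemma coords_seqact g y : XX y -> coords (seqact act g y) = gact g (coords y).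
Proof. by move=> hX; rewrite seqact_X // coords_Phi //; apply: gact_valid; exact: coords_valid. Qed.

Fixpoint mkg (w : seq nat) : FP :=
  if w is l :: w' then (gl (inord l) * mkg w')%g else 1%g.

Lemma gact_mkg w z : all (fun l => l < m 0) w -> gact (mkg w) z = wact 0 w z.
Proof.
elim: w => //= l w IH /andP[hl hw].
rewrite gact_mul IH //; congr lact.
by rewrite /= inordK.
Qed.

Definition Etail (q : nat) (x y : seqspace kk) : Prop := forall i, q <= i -> coords x i = coords y i.

Lemma orbit_tail x y : XX x -> XX y ->
  (orbit_rel act x y <-> exists q, Etail q x y).
Proof.
move=> hx hy; split.
  move=> [g ->]; have [M hM] := wact_fin 0 (gw g) (coords x).
  exists M => i hi; rewrite coords_seqact //; by rewrite /gact hM.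
move=> [q hq].
have [w [hw e]] := trans_lemma q (coords_valid x) (coords_valid y).
exists (mkg w).
rewrite seqact_X // gact_mkg // e; rewrite -[LHS](Phi_coords hy); congr Phi.
apply: functional_extensionality => d; rewrite /splice; case: ltnP => // h.
by rewrite hq.
Qed.

Lemma topfree : topologically_free act proj.
Proof.
move=> g g1 U [UX hU] Ufix; apply/seteqP; split => // x Ux; exfalso.
have [n hn] := hU x Ux.
have hX := UX x Ux.
have gn : gw g != [::].
  apply/negP => /eqP e; apply: g1; apply: val_inj => /=.
  by move: e; rewrite /gw; case: (fpw g).
have gr : redl (gw g) by rewrite /gw redl_redg; exact: fpP.
have [z [vz ag hz]] := tf n (coords_valid x) gn gr (gw_valid g).
have hy : XX (Phi z) by exact: Phi_X.
have Uy : U (Phi z).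
  apply: hn; split => //; apply: ord_inj.
  rewrite Phi_val // (X_enc hX); apply: enc_local => i hi; exact: ag.
have := Ufix _ Uy; rewrite /= act_Phi // => /Phi_inj.
by move=> /(_ (gact_valid g vz) vz).
Qed.

Lemma faithfulP : faithful act proj.
Proof.
move=> g hg; apply: NNPP => g1.
have := topfree g1 (U := XX).
have hX0 : XX (Phi (fun _ => 0)) by apply: Phi_X.
move=> /(_ _ _) h.
have : XX = set0.
  apply: h; first by split => // x _; exists 0 => y [].
  by move=> x hx; exact: hg.
by move=> e; rewrite e in hX0.
Qed.


Notation S := (seqmeas kk).
Definition cyl n (v : 'I_(kk n).+1) : set S := [set y : S | y n = v].
Arguments cyl : clear implicits.

Lemma cyl_meas n v : measurable (cyl n v).
Proof. by apply: sub_sigma_algebra; exists n, v. Qed.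

Lemma pred_meas n (P : 'I_(kk n).+1 -> Prop) : measurable [set y : S | P (y n)].
Proof.
have -> : [set y : S | P (y n)] = \bigcup_(v in [set v | P v]) cyl n v.
  by apply/seteqP; split => [y hy|y [v hv hyv]]; [exists (y n) | rewrite /= hyv].
apply: fin_bigcup_measurable; first exact: finite_finset.
by move=> v _; exact: cyl_meas.
Qed.

Lemma pred2_meas n n' (P : 'I_(kk n).+1 -> 'I_(kk n').+1 -> Prop) :
  measurable [set y : S | P (y n) (y n')].
Proof.
have -> : [set y : S | P (y n) (y n')] = \bigcup_(v in [set: 'I_(kk n).+1]) (cyl n v `&` [set y : S | P v (y n')]).
  apply/seteqP; split => [y hy|y [v _ [<- h]]] //; by exists (y n).
apply: fin_bigcup_measurable; first exact: finite_finset.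
by move=> v _; apply: measurableI; [exact: cyl_meas | exact: pred_meas].
Qed.

Lemma XX_meas : measurable (XX : set S).
Proof.
have -> : (XX : set S) = \bigcap_n [set y : S | proj n (y n.+1) = y n].
  by apply/seteqP; split => [y hy n _|y hy n] //; exact: hy.
apply: bigcapT_measurable => n.
exact: (pred2_meas (fun a b => proj n a = b)).
Qed.

Section Meas.
Variable R : realType.
Import mathcomp.order.order.Order.TTheory GRing.Theory Num.Theory Num.Def.
Local Open Scope ring_scope.

Definition D01 : set R := [set t : R | 0 <= t < 1].

Lemma D01_meas : measurable D01.
Proof.
have -> : D01 = [set` `[0%R, 1%R[%R] by apply/seteqP; split => t; rewrite /= in_itv /=.
exact: measurable_itv.
Qed.

Definition z0 : nat -> nat := fun _ => 0.

Definition fseq (t : R) : S :=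
  if (0 <= t < 1)%R then (fun n => inord (truncn (t * (N n)%:R))) else Phi z0.

Lemma Nr_gt0 n : (0 < (N n)%:R :> R)%R.
Proof. by rewrite ltr0n N_gt0. Qed.

Lemma tr_lt (t : R) n : 0 <= t < 1 -> (truncn (t * (N n)%:R) < N n)%N.
Proof.
move=> /andP[t0 t1]; rewrite truncn_lt_nat ?mulr_ge0 //.
by rewrite gtr_pMl ?Nr_gt0.
Qed.

Lemma fseq_val (t : R) n : 0 <= t < 1 -> (fseq t n : nat) = truncn (t * (N n)%:R).
Proof.
move=> h; rewrite /fseq h inordK //; rewrite -ltnS kkS; exact: tr_lt.
Qed.

Lemma fseq_X (t : R) : XX (fseq t).
Proof.
case: (boolP (0 <= t < 1)) => h; last by rewrite /fseq (negPf h); apply: Phi_X.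
move=> n; apply: ord_inj; rewrite /= !fseq_val //.
have /andP[t0 t1] := h.
set x := t * (N n)%:R.
have x0 : 0 <= x by rewrite mulr_ge0.
have -> : t * (N n.+1)%:R = x * (r n)%:R by rewrite /x /= natrM mulrA.
set q := truncn x.
have [qx xq] := andP (truncn_itv x0).
apply/eqP; rewrite eqn_leq; apply/andP; split.
  rewrite -ltnS ltn_divLR // truncn_lt_nat ?mulr_ge0 //.
  by rewrite natrM ltr_pM2r // ltr0n.
rewrite leq_divRL // truncn_ge_nat ?mulr_ge0 //.
by rewrite natrM ler_pM2r // ltr0n.
Qed.

Lemma fseq_pre n v : fseq @^-1` (cyl n v) =
  [set t | (v%:R / (N n)%:R <= t < v.+1%:R / (N n)%:R)] `|` [set t | ~ (0 <= t < 1) /\ Phi z0 n = v].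
Proof.
have Np := Nr_gt0 n.
have hv : (v < N n)%N by rewrite -kkS.
apply/seteqP; split => t.
  rewrite /cyl /= => e.
  case: (boolP (0 <= t < 1)) => h; last by right; split => //; rewrite -e /fseq (negPf h).
  left; have := fseq_val n h; rewrite e => /esym/eqP.
  have [t0 _] := andP h.
  rewrite truncn_eq ?mulr_ge0 // => /andP[a b].
  by rewrite ler_pdivrMr // ltr_pdivlMr // a b.
case=> [/andP[a b]|[h e]]; rewrite /cyl /=; last by rewrite /fseq (negPf (introN idP h)).
have t0 : 0 <= t by apply: le_trans a; rewrite divr_ge0.
have t1 : t < 1.
  apply: (lt_le_trans b); rewrite ler_pdivrMr // mul1r ler_nat; exact: hv.
have h : 0 <= t < 1 by rewrite t0 t1.
apply: ord_inj; rewrite fseq_val //; apply: truncn_def.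
by rewrite -ler_pdivrMr // -ltr_pdivlMr // a b.
Qed.

Lemma fseq_meas : measurable_fun setT fseq.
Proof.
apply: (@measurability _ _ _ _ setT fseq (@cylinders kk)) => //.
move=> _ [A [n [v ->]] <-]; rewrite setTI.
have -> : [set y : S | y n = v] = cyl n v by [].
rewrite fseq_pre; apply: measurableU.
  have -> : [set t : R | (v%:R / (N n)%:R <= t < v.+1%:R / (N n)%:R)] =
            [set` `[(v%:R / (N n)%:R), (v.+1%:R / (N n)%:R)[%R] :> set R.
    by apply/seteqP; split => t; rewrite /= in_itv.
  exact: measurable_itv.
apply: measurableI.
  by apply: measurableC; exact: D01_meas.
case: (classic (Phi z0 n = v)) => e.
  by apply: (eq_ind setT measurable measurableT); apply/seteqP; split.
by apply: (eq_ind set0 measurable measurable0); apply/seteqP; split.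
Qed.


Definition muf (A : set S) : \bar R := lebesgue_measure (fseq @^-1` A `&` D01).

Let muf0 : muf set0 = 0%E.
Proof. by rewrite /muf preimage_set0 set0I measure0. Qed.

Let muf_ge0 A : (0 <= muf A)%E.
Proof. exact: measure_ge0. Qed.

Let muf_sigma : semi_sigma_additive muf.
Proof.
move=> F mF tF mUF; rewrite /muf preimage_bigcup setI_bigcupl.
apply: measure_semi_sigma_additive.
- move=> n; apply: measurableI; last exact: D01_meas.
  by rewrite -[X in measurable X]setTI; exact: fseq_meas.
- apply/trivIsetP => /= i j _ _ ij; rewrite setIACA -preimage_setI.
  by move/trivIsetP : tF => /(_ _ _ _ _ ij) ->//; rewrite preimage_set0 set0I.
- rewrite -setI_bigcupl; apply: measurableI; last exact: D01_meas.
  by rewrite -preimage_bigcup -[X in measurable X]setTI; exact: fseq_meas.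
Qed.

HB.instance Definition _ := isMeasure.Build _ _ _ muf muf0 muf_ge0 muf_sigma.

Lemma D01_itv : D01 = [set` `[0%R, 1%R[%R].
Proof. by apply/seteqP; split => t; rewrite /= in_itv /=. Qed.

Let muf_setT : muf setT = 1%E.
Proof.
rewrite /muf preimage_setT setTI D01_itv lebesgue_measure_itv /= lte_fin ltr01.
by rewrite sube0.
Qed.

HB.instance Definition _ := Measure_isProbability.Build _ _ _ muf muf_setT.

Lemma muf_cyl n v : muf (XX `&` cyl n v) = ((kk n).+1%:R^-1)%:E.
Proof.
have Np := Nr_gt0 n.
have hv : (v < N n)%N by rewrite -kkS.
rewrite /muf preimage_setI.
have -> : fseq @^-1` XX = setT by apply/seteqP; split => // t _; exact: fseq_X.
rewrite setTI fseq_pre setIUl.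
have -> : [set t | ~ (0 <= t < 1) /\ Phi z0 n = v] `&` D01 = set0.
  by apply/seteqP; split => // t [[h _] h'].
rewrite setU0.
have -> : [set t | (v%:R / (N n)%:R <= t < v.+1%:R / (N n)%:R)] `&` D01 =
   [set` `[(v%:R / (N n)%:R), (v.+1%:R / (N n)%:R)[%R] :> set R.
  apply/seteqP; split => t; rewrite /= in_itv /=; first by case.
  move=> /andP[a b]; split; first by rewrite a b.
  have t0 : 0 <= t by apply: le_trans a; rewrite divr_ge0.
  apply/andP; split => //; apply: (lt_le_trans b); rewrite ler_pdivrMr // mul1r ler_nat; exact: hv.
rewrite lebesgue_measure_itv /= lte_fin ltr_pM2r ?invr_gt0 // ltr_nat ltnSn.
rewrite -EFinB -mulrBl -natrB // subSnn kkS.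
by rewrite mul1r.
Qed.

End Meas.


Lemma X_dec n n' (y : S) : XX y -> (n <= n')%N -> (y n : nat) = enc n (dec n' (y n')).
Proof.
move=> hX hn; rewrite (X_enc hX n) (X_enc hX n'); apply: enc_local => i hi.
rewrite dec_enc //; [exact: valid_lt (coords_valid y) | lia].
Qed.

Lemma cylI n v n' v' : (n <= n')%N ->
  XX `&` cyl n v `&` cyl n' v' = if enc n (dec n' v') == v then XX `&` cyl n' v' else set0.
Proof.
move=> hn; case: ifP => /eqP e; apply/seteqP; split.
- by move=> y [[hX _] h'].
- move=> y [hX h']; split => //; split => //; apply: ord_inj.
  by have := X_dec hX hn; rewrite h' e.
- move=> y [[hX hv] h']; apply: e; by have := X_dec hX hn; rewrite h' hv => <-.
- by [].
Qed.

Definition XS : set S := XX.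

Definition QQ : set (set S) :=
  [set B : set S | measurable B /\ (B `&` XS = set0 \/ exists n v, B `&` XS = XS `&` cyl n v)].

Lemma QQ_setI : setI_closed QQ.
Proof.
move=> A B [mA hA] [mB hB]; split; first exact: measurableI.
have -> : A `&` B `&` XX = (A `&` XX) `&` (B `&` XX).
  by apply/seteqP; split => y; [move=> [[a b] c]|move=> [[a c] [b _]]].
case: hA => [->|[n [v ->]]]; first by left; rewrite set0I.
case: hB => [->|[n' [v' ->]]]; first by left; rewrite setI0.
have e : XX `&` cyl n v `&` (XX `&` cyl n' v') = XX `&` cyl n v `&` cyl n' v'.
  by apply/seteqP; split => y; [move=> [[a b] [c d]]|move=> [[a b] d]].
rewrite e; case: (leqP n n') => hn.
  by rewrite cylI //; case: ifP => _; [right; exists n', v'|left].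
have -> : XX `&` cyl n v `&` cyl n' v' = XX `&` cyl n' v' `&` cyl n v.
  by apply/seteqP; split => y; [move=> [[a b] d]|move=> [[a b] d]].
by rewrite cylI ?(ltnW hn) //; case: ifP => _; [right; exists n, v|left].
Qed.

Lemma QQ_gen : (@measurable _ S) = <<s QQ >>.
Proof.
apply/seteqP; split.
  apply: smallest_sub; first exact: smallest_sigma_algebra.
  move=> _ [n [v ->]]; apply: sub_sigma_algebra; split; first exact: cyl_meas.
  by right; exists n, v; rewrite setIC.
apply: smallest_sub; first exact: sigma_algebra_measurable.
by move=> B [].
Qed.

Lemma XX_cyl0 : XX = XX `&` cyl 0 ord0.
Proof.
apply/seteqP; split => y; last by case.
move=> hX; split => //; apply: ord_inj.
by have : (y 0 : nat) < 1 := ltn_ord (y 0); case: (y 0 : nat).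
Qed.

Section Uniq.
Variable R : realType.
Local Open Scope ring_scope.
Variables (m1 m2 : {measure set S -> \bar R}).
Hypothesis m1fin : (m1 setT < +oo)%E.
Hypothesis m1X : forall B, measurable B -> m1 B = m1 (B `&` XX).
Hypothesis m2X : forall B, measurable B -> m2 B = m2 (B `&` XX).
Hypothesis m12 : forall n v, m1 (XX `&` cyl n v) = m2 (XX `&` cyl n v).

Lemma uniqX B : measurable B -> m1 B = m2 B.
Proof.
apply: (measure_unique QQ (fun _ => setT) QQ_gen QQ_setI) => //.
- move=> _; split => //; right; exists 0, ord0; by rewrite setTI -XX_cyl0.
- by apply/seteqP; split => // y _; exists 0.
- move=> A [mA hA]; rewrite m1X // m2X //.
  by case: hA => [->|[n [v ->]]]; rewrite ?measure0 // m12.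
Qed.
End Uniq.


Definition ag (g : FP) : S -> S := seqact act g.

Lemma ag_meas g : measurable_fun setT (ag g).
Proof.
apply: (@measurability _ _ _ _ setT (ag g) (@cylinders kk)) => //.
move=> _ [A [n [v ->]] <-]; rewrite setTI.
exact: (pred_meas (fun a => act n g a = v)).
Qed.

Lemma agK g y : ag (g^-1)%g (ag g y) = y.
Proof.
apply: functional_extensionality_dep => n.
by rewrite /ag /seqact -act_mul mulVg act_id.
Qed.

Lemma agKV g y : ag g (ag (g^-1)%g y) = y.
Proof. by have := agK (g^-1)%g y; rewrite invgK. Qed.

Lemma ag_X g y : XX (ag g y) <-> XX y.
Proof.
split; last exact: seqact_XX.
by move=> h; rewrite -(agK g y); exact: seqact_XX.
Qed.

Section PF.
Local Open Scope ring_scope.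
Variables (R : realType) (mu : {measure set S -> \bar R}) (f : S -> S).
Definition pf (mf : measurable_fun setT f) : set S -> \bar R := fun A => mu (f @^-1` A).
Variable mf : measurable_fun setT f.

Let pf0 : pf mf set0 = 0%E.
Proof. by rewrite /pf preimage_set0 measure0. Qed.

Let pf_ge0 A : (0 <= pf mf A)%E.
Proof. by apply: measure_ge0; rewrite -[X in measurable X]setIT; apply: mf. Qed.

Let pf_sigma : semi_sigma_additive (pf mf).
Proof.
move=> F mF tF mUF; rewrite /pf preimage_bigcup.
apply: measure_semi_sigma_additive.
- by move=> n; rewrite -[X in measurable X]setTI; exact: mf.
- apply/trivIsetP => /= i j _ _ ij; rewrite -preimage_setI.
  by move/trivIsetP : tF => /(_ _ _ _ _ ij) ->//; rewrite preimage_set0.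
- by rewrite -preimage_bigcup -[X in measurable X]setTI; exact: mf.
Qed.

HB.instance Definition _ := isMeasure.Build _ _ _ (pf mf) pf0 pf_ge0 pf_sigma.
End PF.

Section Inv.
Variable R : realType.
Local Open Scope ring_scope.

Lemma muf_X (B : set S) : muf R B = muf R (B `&` XX).
Proof.
rewrite /muf; congr (lebesgue_measure _); apply/seteqP; split => t [h1 h2] //.
by split => //; split => //; exact: fseq_X.
by case: h1.
Qed.

Lemma muf_fin : (muf R setT < +oo)%E.
Proof. by rewrite probability_setT ltry. Qed.

Lemma muf_inv g B : measurable B -> muf R (ag g @^-1` B) = muf R B.
Proof.
move=> mB.
apply: (uniqX (m1 := pf (muf R) (ag_meas g)) (m2 := muf R)) => //.
- rewrite /pf /= preimage_setT; exact: muf_fin.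
- move=> C mC; rewrite /pf /= muf_X [in RHS]muf_X; congr (muf R _).
  apply/seteqP; split => y [h1 h2]; split => //; first by split => //; exact/ag_X.
  by case: h1.
- move=> C mC; exact: muf_X.
- move=> n v; rewrite /pf /=.
  have -> : ag g @^-1` (XX `&` cyl n v) = XX `&` cyl n (act n (g^-1)%g v).
    apply/seteqP; split => y /= [h1 h2]; split; first exact/ag_X.
      by rewrite /cyl /= -h2 -act_mul mulVg act_id.
    by apply/ag_X.
    by rewrite /cyl /= /ag /seqact h2 -act_mul mulgV act_id.
  by rewrite !muf_cyl.
Qed.
End Inv.


Lemma act_trans n (v w : 'I_(kk n).+1) : exists g, act n g v = w.
Proof.
have [w0 [hw e]] := trans_lemma n (dec_valid0 n v) (dec_valid0 n w).
exists (mkg w0); apply: ord_inj => /=.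
rewrite gact_mkg // e -[RHS](@enc_dec n w); last by rewrite -kkS.
by apply: enc_local => i hi; rewrite /splice hi.
Qed.

Lemma img_pre g (B : set S) : ag g @` B = ag (g^-1)%g @^-1` B.
Proof.
apply/seteqP; split => y.
  by move=> [x hx <-]; rewrite /= agK.
by move=> hy; exists (ag (g^-1)%g y) => //; rewrite agKV.
Qed.

Lemma img_cyl (A : set S) g n v : (forall h, ag h @` A = A) ->
  ag g @` (A `&` cyl n v) = A `&` cyl n (act n g v).
Proof.
move=> hA; apply/seteqP; split => y.
  move=> [x [xA xv] <-]; split; first by rewrite -(hA g); exists x.
  by rewrite /cyl /= /ag /seqact xv.
move=> [yA yv]; exists (ag (g^-1)%g y); last by rewrite agKV.
split; first by rewrite -(hA (g^-1)%g); exists y.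
by rewrite /cyl /= /ag /seqact yv -act_mul mulVg act_id.
Qed.

Lemma bigU_sub T n (F : 'I_n -> set T) (A : set T) : (forall i, F i `<=` A) ->
  \big[setU/set0]_(i < n) F i `<=` A.
Proof.
move=> h; elim/big_ind: _ => //.
by move=> x y hx hy z [/hx|/hy].
Qed.

Section Erg.
Variable R : realType.
Import mathcomp.order.order.Order.TTheory Num.Theory GRing.Theory.
Local Open Scope ring_scope.

Lemma muf_le1 (B : set S) : measurable B -> (muf R B <= 1)%E.
Proof. by move=> mB; apply: probability_le1. Qed.

Lemma muf_fin_num (B : set S) : measurable B -> muf R B \is a fin_num.
Proof.
move=> mB; rewrite ge0_fin_numE ?measure_ge0 //.
by apply: le_lt_trans (muf_le1 mB) _; rewrite ltry.
Qed.

Lemma erg_piece (A : set S) n (v : 'I_(kk n).+1) : measurable A -> A `<=` XX ->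
  (forall h, ag h @` A = A) ->
  muf R (A `&` cyl n v) = (fine (muf R A) / (kk n).+1%:R)%:E.
Proof.
move=> mA AX hA.
have mc w : measurable (A `&` cyl n w) by apply: measurableI => //; exact: cyl_meas.
have hc : forall w, muf R (A `&` cyl n w) = muf R (A `&` cyl n ord0).
  move=> w; have [g <-] := @act_trans n ord0 w.
  rewrite -img_cyl // img_pre muf_inv //.
have hU : A = \big[setU/set0]_(w < (kk n).+1) (A `&` cyl n w).
  apply/seteqP; split; last by apply: bigU_sub => w x [].
  move=> y yA; rewrite (bigD1 (y n)) //=; by left.
have hsum : muf R A = \sum_(w < (kk n).+1) muf R (A `&` cyl n w).
  rewrite [in LHS]hU; apply: measure_semi_additive_ord => //.
    apply/trivIsetP => i j _ _ ij; apply/seteqP; split => // y [[_ hi] [_ hj]].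
    by move: ij; rewrite -hi -hj eqxx.
  by rewrite -hU.
set c := fine (muf R (A `&` cyl n ord0)).
have ec : muf R (A `&` cyl n ord0) = c%:E by rewrite /c fineK // muf_fin_num.
have hs' : \sum_(w < (kk n).+1) muf R (A `&` cyl n w) = \sum_(w < (kk n).+1) c%:E.
  by apply: eq_bigr => w _; rewrite hc ec.
rewrite hs' in hsum.
rewrite sumEFin sumr_const card_ord /= in hsum.
rewrite hsum /= hc ec; congr EFin.
by rewrite -[c *+ _]mulr_natr mulfK // pnatr_eq0.
Qed.


Lemma ergodicP : ergodic act proj (muf R).
Proof.
move=> A mA AX hA; change (muf R A = 0%E \/ muf R A = 1%E).
have afin := muf_fin_num mA.
set a := fine (muf R A).
have ea : muf R A = a%:E by rewrite /a fineK.
have a0 : 0 <= a by rewrite /a fine_ge0 // measure_ge0.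
have key := @uniqX R (mrestr (muf R) mA) (mscale (NngNum a0) (muf R)).
have h : muf R (A `&` A) = (a%:E * muf R A)%E.
  apply: (key _ _ _ _ A mA) => //.
  - rewrite /mrestr; apply: le_lt_trans (muf_le1 _) _; last by rewrite ltry.
    exact: measurableI.
  - move=> B mB; rewrite /mrestr; congr (muf R _); apply/seteqP; split => y.
      by move=> [hB hAy]; split => //; split => //; exact: AX.
    by move=> [[hB _] hAy].
  - by move=> B mB; rewrite /mscale /=; congr (_ * _)%E; exact: muf_X.
  - move=> n v; change (muf R (XX `&` cyl n v `&` A) = (a%:E * muf R (XX `&` cyl n v))%E).
    have -> : XX `&` cyl n v `&` A = A `&` cyl n v.
      apply/seteqP; split => y; first by move=> [[_ hv] hAy].
      by move=> [hAy hv]; split => //; split => //; exact: AX.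
    rewrite (erg_piece v mA AX hA) muf_cyl -EFinM //.
have h2 : muf R A = (a%:E * muf R A)%E by rewrite -{1}(setIid A); exact: h.
rewrite ea -EFinM in h2; case: h2 => {}h.
have : a * (1 - a) = 0 by rewrite mulrBr mulr1 -h subrr.
move/eqP; rewrite mulf_eq0 => /orP[/eqP a0'|/eqP a1].
  by left; rewrite ea a0'.
by right; rewrite ea; congr EFin; apply/eqP; rewrite eq_sym -subr_eq0 a1.
Qed.

End Erg.


Lemma coord_meas i c : measurable [set x : S | coords x i = c].
Proof. exact: (pred_meas (fun a : 'I_(kk i.+1).+1 => (a : nat) %% r i = c)). Qed.

Lemma Etail_meas q : measurable [set z : S * S | Etail q z.1 z.2].
Proof.
have -> : [set z : S * S | Etail q z.1 z.2] =
   \bigcap_i [set z : S * S | (q <= i)%N -> coords z.1 i = coords z.2 i].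
  by apply/seteqP; split => z h i; [move=> _ hi|]; apply: h.
apply: bigcapT_measurable => i.
have [hi|hi] : (q <= i)%N \/ (i < q)%N by lia.
  have -> : [set z : S * S | (q <= i)%N -> coords z.1 i = coords z.2 i] =
     \bigcup_(c in [set: 'I_(r i)]) ([set x : S | coords x i = c] `*` [set y : S | coords y i = c]).
    apply/seteqP; split => z.
      move=> /(_ hi) e.
      have hc : coords z.1 i < r i by rewrite /coords ltn_pmod.
      by exists (Ordinal hc) => //; split => //=.
    by move=> [c _ [/= h1 h2]] _; rewrite h1 h2.
  apply: fin_bigcup_measurable; first exact: finite_finset.
  by move=> c _; apply: measurableX; exact: coord_meas.
have -> : [set z : S * S | (q <= i)%N -> coords z.1 i = coords z.2 i] = setT.
  by apply/seteqP; split => // z _ h; move: hi; rewrite ltnNge h.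
exact: measurableT.
Qed.

Lemma Etail_fin q (x : S) : XX x -> finite_set [set y : S | XX y /\ Etail q x y].
Proof.
move=> hx.
apply: (@sub_finite_set _ _ ((fun v : 'I_(kk q).+1 => Phi (splice q (dec q v) (coords x))) @` setT)).
  move=> y [hy hq]; exists (y q) => //.
  rewrite -[RHS](Phi_coords hy); congr Phi.
  apply: functional_extensionality => i; rewrite /splice; case: ltnP => hi.
    rewrite (X_enc hy q) dec_enc //; exact: valid_lt (coords_valid y).
  exact: hq.
by apply: finite_image; exact: finite_finset.
Qed.

Lemma hyperP (R : realType) : hyperfinite act proj (muf R).
Proof.
exists set0, Etail; split.
- by split; [exact: measurable0 | exact: measure0].
- split; first exact: Etail_meas.
  by move=> q x y _ _ h i hi; apply: h; lia.
- move=> q; split.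
  + by move=> x _ i _.
  + by move=> x y _ _ h i hi; rewrite h.
  + by move=> x y z _ _ _ h1 h2 i hi; rewrite h1 // h2.
- by move=> q x hx; exact: Etail_fin.
- by move=> x y hx hy _ _; exact: orbit_tail.
Qed.

Lemma inducedP (R : realType) : induced_measure proj (muf R).
Proof.
split.
  change (muf R XX = 1%E); have := @muf_X R setT; rewrite setTI => <-.
  exact: probability_setT.
move=> n v; exact: muf_cyl.
Qed.

Theorem theorem7p1 (R : realType) :
  exists (G : groupType), finitely_generated G /\ ~ amenable R G /\
  exists (k : nat -> nat)
         (act : forall n, G -> 'I_(k n).+1 -> 'I_(k n).+1)
         (p : forall n, 'I_(k n.+1).+1 -> 'I_(k n).+1)
         (mu : probability (seqmeas k) R),
    profinite_data act p /\ induced_measure p mu /\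
    [/\ ergodic act p mu,
        faithful act p,
        hyperfinite act p mu &
        topologically_free act p].
Proof.
exists FP; split; first exact: FP_fg.
split; first exact: FP_nonamenable.
exists kk, act, proj, (muf R).
split; first exact: pdata.
split; first exact: inducedP.
split.
- exact: ergodicP.
- exact: faithfulP.
- exact: hyperP.
- exact: topfree.
Qed.
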